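(* Let $C>1$ be a constant such that for every real $Z>0$ and every cubic field $K$ with $|\Delta(K)|\le Z$, the set $S_K(CZ^{1/4})$ is nonempty. Let $X,Y>0$ be real numbers with $Y\geq CX^{1/4}$, and let $K$ be a cubic field with $X/2\leq|\Delta(K)|\leq X$. Then \[ \#S_K(Y)/\#S_K(CX^{1/4})\ll Y^2/X^{1/2}, \] where the implied constant is independent of $X$, $Y$, and $K$.
   Context: For a cubic field $K$ with ring of integers $\mathcal{O}_K$ and discriminant $\Delta(K)$, an element $\alpha\in\mathcal{O}_K$ is reduced if its trace lies in $\{-1,0,1\}$; $|\alpha|_\infty=\max_{v\mid\infty}|\alpha|_v$ (maximum of $|\tau(\alpha)|$ over complex embeddings $\tau$); for $Y>0$, $S_K(Y)$ is the set of reduced $\alpha\in\mathcal{O}_K\setminus\mathbb{Z}$ with $|\alpha|_\infty<Y$. *)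

(* Defs.v *)
From mathcomp Require Import all_boot all_order all_algebra.
From mathcomp Require Import reals exp complex.
Set Implicit Arguments. Unset Strict Implicit. Unset Printing Implicit Defensive.
Import Order.TTheory GRing.Theory Num.Theory.
Local Open Scope ring_scope.

(* A cubic field K is presented as Q[x]/(p) for a monic irreducible p in Q[x]
   of degree 3 (every cubic field arises this way).  Elements of K are
   represented by their reduced representatives f : {poly rat} with
   size f <= 3 (i.e. deg f <= 2); alpha = f(theta), theta = class of x. *)

Definition cubic_poly (p : {poly rat}) : Prop :=
  p \is monic /\ size p = 4%N /\ irreducible_poly p.

Definition inK (f : {poly rat}) : Prop := (size f <= 3)%N.

Definition mulK (p f g : {poly rat}) : {poly rat} := (f * g) %% p.

(* Trace Tr_{K/Q}(alpha): trace of the Q-linear map "multiplication by alpha"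
   on K in the basis 1, theta, theta^2. *)
Definition traceK (p f : {poly rat}) : rat :=
  \sum_(i < 3) ((f * 'X^i) %% p)`_i.

(* alpha lies in O_K: alpha is a root of a monic polynomial with integer
   coefficients, i.e. q(alpha) = 0 in K. *)
Definition in_OK (p f : {poly rat}) : Prop :=
  inK f /\ exists q : {poly int}, q \is monic /\
    p %| (map_poly (intr : int -> rat) q) \Po f.

Definition in_Z (f : {poly rat}) : Prop := exists k : int, f = (k%:~R)%:P.

Definition reduced (p f : {poly rat}) : Prop :=
  traceK p f = -1 \/ traceK p f = 0 \/ traceK p f = 1.

(* |alpha|_infty < Y : for every complex embedding tau (theta |-> z, z a complex
   root of p), |tau(alpha)| < Y.  Since the embeddings are finitely many, this
   is exactly "max_tau |tau(alpha)| < Y". *)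
Definition abs_inf_lt (R : realType) (p f : {poly rat}) (Y : R) : Prop :=
  forall z : R[i], root (map_poly (ratr : rat -> R[i]) p) z ->
    `|(map_poly (ratr : rat -> R[i]) f).[z]| < real_complex R Y.

Definition S_K (R : realType) (p : {poly rat}) (Y : R) (f : {poly rat}) : Prop :=
  in_OK p f /\ ~ in_Z f /\ reduced p f /\ abs_inf_lt p f Y.

Definition card_is (P : {poly rat} -> Prop) (n : nat) : Prop :=
  exists s : seq {poly rat}, uniq s /\ (forall f, f \in s <-> P f) /\ size s = n.

Definition is_disc (p : {poly rat}) (d : int) : Prop :=
  exists w : 'I_3 -> {poly rat},
    (forall i, in_OK p (w i)) /\
    (forall c : 'I_3 -> rat, \sum_i c i *: w i = 0 -> forall i, c i = 0) /\
    (forall f, in_OK p f -> exists k : 'I_3 -> int, f = \sum_i (k i)%:~R *: w i) /\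
    d%:~R = \det (\matrix_(i < 3, j < 3) traceK p (mulK p (w i) (w j))).

(* Main.v *)
Require Import Defs.
From mathcomp Require Import all_boot all_order all_algebra.
From mathcomp Require Import reals exp complex.
From mathcomp Require Import all_field.
From mathcomp Require Import ring lra zify.
From Stdlib Require Import ClassicalEpsilon.
Import Order.TTheory GRing.Theory Num.Theory.

Lemma count_fibers (T U : eqType) (L : T -> U) (s : seq T) (lab : seq U) (k : nat) :
  {in s, forall x, L x \in lab} -> (forall l, count (fun x => L x == l) s <= k) ->
  size s <= size lab * k.
Proof.
move=> hin hk.
have -> : size s = count (fun x => L x \in lab) s.
  by rewrite -count_predT; apply: eq_in_count => x /hin ->.
elim: lab {hin} => [|l lab IH] /=; first by rewrite count_pred0.
apply: leq_trans (_ : count (fun x => L x == l) s + count (fun x => L x \in lab) s <= _).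
  rewrite -[X in X <= _]addn0 -(count_predUI (fun x => L x == l) (fun x => L x \in lab)).
  rewrite leq_add //; apply: sub_count => x /=; by rewrite inE.
by rewrite mulSn leq_add.
Qed.

Lemma fiber_bound (V : zmodType) (U : eqType) (L : V -> U) (s sm : seq V) (l : U) :
  uniq s ->
  (forall f g, f \in s -> g \in s -> L f = L g -> f = g \/ (f - g)%R \in sm) ->
  count (fun x => L x == l) s <= (size sm).+1.
Proof.
move=> us hs.
rewrite -size_filter.
set F := filter _ s.
have uF : uniq F by apply: filter_uniq.
have sF : {subset F <= s} by move=> x; rewrite mem_filter => /andP [].
have LF : forall x, x \in F -> L x = l by move=> x; rewrite mem_filter => /andP [/eqP].
case EF : F uF sF LF => [|g0 F'] // uF sF LF.
have g0s : g0 \in s by apply: sF; rewrite inE eqxx.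
rewrite -(size_map (fun x => (x - g0)%R)).
apply: (@leq_trans (size (0%R :: sm))) => //.
apply: uniq_leq_size.
  rewrite map_inj_uniq // => x y; exact: addIr.
move=> y /mapP [x xF ->].
have [-> | h] := hs x g0 (sF _ xF) g0s (etrans (LF _ xF) (esym (LF _ (mem_head _ _)))).
  by rewrite subrr mem_head.
by rewrite inE h orbT.
Qed.

Local Open Scope ring_scope.
Set Implicit Arguments. Unset Strict Implicit.

Definition quad {R : nzRingType} (A B C : R) : {poly R} := Poly [:: A; B; C].

Lemma quadE (R : comNzRingType) (A B C : R) :
  quad A B C = A%:P + B%:P * 'X + C%:P * 'X^2.
Proof. rewrite /quad /= !cons_poly_def mul0r add0r; ring. Qed.

Lemma coef_quad (R : nzRingType) (A B C : R) :
  [/\ (quad A B C)`_0 = A, (quad A B C)`_1 = B & (quad A B C)`_2 = C].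
Proof. by rewrite /quad !coef_Poly. Qed.

Lemma size_quad (R : nzRingType) (A B C : R) : (size (quad A B C) <= 3)%N.
Proof. exact: size_Poly. Qed.

Lemma quad_of (R : nzRingType) (f : {poly R}) : (size f <= 3)%N ->
  f = quad f`_0 f`_1 f`_2.
Proof.
move=> hf; apply/polyP => i; rewrite coef_Poly.
case: i => [|[|[|i]]] //=; rewrite nth_nil nth_default //.
exact: leq_trans hf _.
Qed.

Lemma horner_quad (R : comNzRingType) (A B C x : R) :
  (quad A B C).[x] = A + B * x + C * x ^+ 2.
Proof. by rewrite quadE !hornerE. Qed.

Lemma map_quad (R S : comNzRingType) (g : {rmorphism R -> S}) (A B C : R) :
  map_poly g (quad A B C) = quad (g A) (g B) (g C).
Proof. by rewrite !quadE !(rmorphD, rmorphM, rmorphXn) /= !(map_polyC, map_polyX). Qed.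

Lemma monic4E (R : nzRingType) (p : {poly R}) : p \is monic -> size p = 4%N ->
  p = 'X^3 + quad p`_0 p`_1 p`_2.
Proof.
move=> /monicP hl hs; apply/polyP => i; rewrite coefD coefXn coef_Poly.
have h3 : p`_3 = 1 by rewrite -hl /lead_coef hs.
case: i => [|[|[|[|i]]]] /=; rewrite ?add0r ?addr0 //.
by rewrite nth_default // hs.
Qed.

Lemma quad0 (R : nzRingType) (A B C : R) : (quad A B C)`_0 = A.
Proof. by rewrite /quad coef_Poly. Qed.
Lemma quad1 (R : nzRingType) (A B C : R) : (quad A B C)`_1 = B.
Proof. by rewrite /quad coef_Poly. Qed.
Lemma quad2 (R : nzRingType) (A B C : R) : (quad A B C)`_2 = C.
Proof. by rewrite /quad coef_Poly. Qed.

Lemma size_cubic (R : nzRingType) (p0 p1 p2 : R) : size ('X^3 + quad p0 p1 p2) = 4%N.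
Proof. by rewrite size_addl ?size_polyXn // (leq_ltn_trans (size_quad _ _ _)) ?size_polyXn. Qed.

Lemma traceK_quad (p0 p1 p2 a b c : rat) :
  traceK ('X^3 + quad p0 p1 p2) (quad a b c) = 3 * a - b * p2 + c * (p2 ^+ 2 - 2 * p1).
Proof.
set p := 'X^3 + quad p0 p1 p2.
have sp : size p = 4%N by apply: size_cubic.
have sq (A B C : rat) : (size (quad A B C) < size p)%N by rewrite sp ltnS size_quad.
rewrite /traceK !big_ord_recl big_ord0 /= addr0.
have -> : quad a b c * 'X^0 = quad a b c by rewrite expr0 mulr1.
have -> : quad a b c * 'X^1 = c%:P * p + quad (- (c * p0)) (a - c * p1) (b - c * p2).
  rewrite /p !quadE !polyCN !polyCB !polyCM; ring.
have -> : quad a b c * 'X^2 = (c%:P * 'X + (b - c * p2)%:P) * p +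
   quad (- ((b - c * p2) * p0)) (- (c * p0) - (b - c * p2) * p1)
        (a - c * p1 - (b - c * p2) * p2).
  rewrite /p !quadE !polyCN !polyCB !polyCM; ring.
rewrite modp_small ?modp_addl_mul_small //.
rewrite /bump /=.
have [-> _ _] := coef_quad a b c.
have [_ -> _] := coef_quad (- (c * p0)) (a - c * p1) (b - c * p2).
have [_ _ ->] := coef_quad (- ((b - c * p2) * p0)) (- (c * p0) - (b - c * p2) * p1)
        (a - c * p1 - (b - c * p2) * p2).
ring.
Qed.

Lemma trace_sum (F : numFieldType) (p f : {poly rat}) (z1 z2 z3 : F) :
  p \is monic -> size p = 4%N -> (size f <= 3)%N ->
  map_poly ratr p = ('X - z1%:P) * ('X - z2%:P) * ('X - z3%:P) ->
  ratr (traceK p f) = (map_poly ratr f).[z1] + (map_poly ratr f).[z2] + (map_poly ratr f).[z3].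
Proof.
move=> mp sp sf hP.
have Ep := monic4E mp sp.
move: hP; rewrite Ep (quad_of sf) rmorphD /= map_quad map_polyXn traceK_quad.
clear Ep; move: (p`_0) (p`_1) (p`_2) => p0 p1 p2.
have -> : ('X - z1%:P) * ('X - z2%:P) * ('X - z3%:P) =
   'X^3 + quad (- (z1 * z2 * z3)) (z1 * z2 + z1 * z3 + z2 * z3) (- (z1 + z2 + z3)).
  rewrite quadE !polyCN !polyCD !polyCM; ring.
move/addrI => hq.
have h1 := congr1 (fun q : {poly F} => q`_1) hq.
have h2 := congr1 (fun q : {poly F} => q`_2) hq.
move: h1 h2 => /=; rewrite !quad1 !quad2 => h1 h2.

rewrite !map_quad !horner_quad !(rmorphD, rmorphB, rmorphN, rmorphM, rmorphXn, rmorph_nat) /=.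
rewrite h1 h2; ring.
Qed.

Lemma cubic_coprime_deriv (p : {poly rat}) : cubic_poly p -> coprimep p p^`().
Proof.
move=> [mp [sp irr]].
have d0 : p^`() != 0.
  apply/eqP => /(congr1 (fun q : {poly rat} => q`_2)); rewrite coef_deriv coef0.
  have -> : p`_3 = 1 by move/monicP: mp; rewrite /lead_coef sp.
  by [].
have ltd := lt_size_deriv (irredp_neq0 irr).
rewrite /coprimep; apply/negPn/negP => hg.
have := irr _ hg (dvdp_gcdl p p^`()).
move=> /andP [_ hp].
have hpd : p %| p^`() := dvdp_trans hp (dvdp_gcdr _ _).
by move: (dvdp_leq d0 hpd); rewrite leqNgt ltd.
Qed.

Lemma cubic_roots (F : numClosedFieldType) (p : {poly rat}) : cubic_poly p ->
  exists z1 z2 z3 : F, map_poly ratr p = ('X - z1%:P) * ('X - z2%:P) * ('X - z3%:P)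
    /\ uniq [:: z1; z2; z3].
Proof.
move=> cp; have [mp [sp irr]] := cp.
have [r Er] := closed_field_poly_normal (map_poly (ratr : rat -> F) p).
have lc : lead_coef (map_poly (ratr : rat -> F) p) = 1.
  by rewrite lead_coef_map (monicP mp) rmorph1.
rewrite lc scale1r in Er.
have sr : size r = 3%N.
  have := size_prod_XsubC r id; rewrite -Er size_map_poly sp.
  by case.
have sep : separable_poly (map_poly (ratr : rat -> F) p).
  by rewrite unlock deriv_map coprimep_map cubic_coprime_deriv.
move: Er sep; case: r sr => [|z1 [|z2 [|z3 [|]]]] // _.
rewrite !big_cons big_nil mulr1 mulrA => Er.
rewrite Er => sep; exists z1, z2, z3; split => //.
by rewrite -separable_prod_XsubC !big_cons big_nil mulr1 mulrA.
Qed.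

Lemma irr_dvd (F : numFieldType) (p g : {poly rat}) (z : F) : irreducible_poly p ->
  root (map_poly ratr p) z -> root (map_poly ratr g) z -> p %| g.
Proof.
move=> irr rp rg.
have hd : gcdp p g %| p := dvdp_gcdl p g.
have s1 : size (gcdp p g) != 1%N.
  apply/negP => /eqP s1.
  have : root (map_poly (ratr : rat -> F) (gcdp p g)) z by rewrite gcdp_map root_gcd rp rg.
  have Ec : gcdp p g = ((gcdp p g)`_0)%:P by apply/size1_polyC; rewrite s1.
  rewrite Ec map_polyC rootC /= fmorph_eq0 => /eqP c0.
  by move: s1; rewrite Ec c0 size_poly0.
have := irr _ s1 hd => /andP [_ h].
exact: dvdp_trans h (dvdp_gcdr _ _).
Qed.

Lemma map_int_comp (F : numFieldType) (q : {poly int}) (f : {poly rat}) (x : F) :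
  (map_poly (ratr : rat -> F) (map_poly (intr : int -> rat) q \Po f)).[x] =
  (map_poly (intr : int -> F) q).[(map_poly ratr f).[x]].
Proof.
rewrite map_comp_poly horner_comp -map_poly_comp.
congr (_.[_]); apply: eq_map_poly => b /=; by rewrite rmorph_int.
Qed.

Lemma OK_Aint (p f : {poly rat}) (z : algC) : root (map_poly ratr p) z ->
  in_OK p f -> (map_poly ratr f).[z] \in Aint.
Proof.
move=> rp [_ [q [mq dq]]].
apply: (@root_monic_Aint (map_poly intr q)).
- have /dvdpP [r Er] := dq.
  rewrite /root -map_int_comp Er rmorphM /= hornerM.
  by move/eqP: rp => ->; rewrite mulr0.
- exact: monic_map.
- by apply/polyOverP => i; rewrite coef_map /= rpred_int.
Qed.

Lemma Aint_OK (p f : {poly rat}) (z : algC) : irreducible_poly p -> root (map_poly ratr p) z ->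
  inK f -> (map_poly ratr f).[z] \in Aint -> in_OK p f.
Proof.
move=> irr rp kf hA; split => //.
have [m [Em mm] _] := minCpolyP ((map_poly ratr f).[z]).
have : minCpoly (map_poly ratr f).[z] \is a polyOver Num.int := hA.
move=> /floorpP [q Eq].
exists q; split.
  have : map_poly (intr : int -> algC) q \is monic by rewrite -Eq Em map_monic.
  move/monicP; rewrite lead_coef_map_inj //; last exact: intr_inj.
  by move=> h; apply/monicP; apply: (@intr_inj algC); rewrite h.
apply: (@irr_dvd algC p _ z irr rp).
by rewrite /root map_int_comp -Eq; exact: root_minCpoly.
Qed.

Lemma OK_sub (p f g : {poly rat}) : cubic_poly p -> in_OK p f -> in_OK p g -> in_OK p (f - g).
Proof.
move=> [mp [sp irr]] hf hg.
have [z rz] : exists z : algC, root (map_poly ratr p) z.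
  by apply/closed_rootP; rewrite size_map_poly sp.
apply: (@Aint_OK p _ z irr rz).
  rewrite /inK; apply: leq_trans (size_add _ _) _.
  by rewrite size_opp geq_max; case: hf => -> _; case: hg => -> _.
rewrite rmorphB /= hornerD hornerN.
by apply: rpredB; apply: OK_Aint rz _.
Qed.

Definition zr (K : nat) : seq int := [seq (n%:Z - K%:Z) | n <- iota 0 (2 * K + 1)].

Lemma size_zr K : size (zr K) = (2 * K + 1)%N.
Proof. by rewrite size_map size_iota. Qed.

Lemma zr_mem (R : realType) (x s : R) (K : nat) : 0 < s -> `|x| < K%:R * s ->
  Num.floor (x / s) \in zr K.
Proof.
move=> s0 hx.
have hx' : `|x / s| < K%:R by rewrite normf_div (gtr0_norm s0) ltr_pdivrMr.
move: hx'; rewrite ltr_norml => /andP [h1 h2].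
set m := Num.floor (x / s).
have m1 : - (K%:Z) <= m by rewrite floor_ge_int rmorphN /= ltW.
have m2 : m < K%:Z by rewrite floor_lt_int.
apply/mapP; exists (absz (m + K%:Z)).
  rewrite mem_iota add0n; lia.
lia.
Qed.

Lemma floor_eq_close (R : realType) (a b : R) : Num.floor a = Num.floor b -> `|a - b| < 1.
Proof.
move=> e; have := floor_itv a; have := floor_itv b; rewrite e.
move=> /andP [h1 h2] /andP [h3 h4].
rewrite ltr_norml; apply/andP; split.
  rewrite intrD in h2 h4; lra.
rewrite intrD in h2 h4; lra.
Qed.

Definition lab3 (K : nat) : seq (rat * (int * int)) :=
  [seq (t, ij) | t <- [:: -1; 0; 1], ij <- [seq (i, j) | i <- zr K, j <- zr K]].

Lemma size_lab3 K : size (lab3 K) = (3 * ((2 * K + 1) * (2 * K + 1)))%N.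
Proof. by rewrite /lab3 !size_allpairs size_zr. Qed.

Lemma count_main (R : realType) (p : {poly rat}) (Y r s : R) (cx cy : {poly rat} -> R)
    (sY sm : seq {poly rat}) (K : nat) :
  0 < s -> Y <= K%:R * s ->
  uniq sY -> (forall f, f \in sY -> S_K p Y f) -> (forall f, S_K p r f -> f \in sm) ->
  (forall f, S_K p Y f -> `|cx f| < Y /\ `|cy f| < Y) ->
  (forall f g, S_K p Y f -> S_K p Y g -> traceK p f = traceK p g ->
     `|cx f - cx g| < s -> `|cy f - cy g| < s -> f = g \/ S_K p r (f - g)) ->
  (size sY <= 3 * ((2 * K + 1) * (2 * K + 1)) * (size sm).+1)%N.
Proof.
move=> s0 YK uY hY hm hc hd.
pose L f := (traceK p f, (Num.floor (cx f / s), Num.floor (cy f / s))).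
rewrite -size_lab3.
apply: (@count_fibers _ _ L).
  move=> f /hY Sf; have [h1 h2] := hc f Sf.
  have [_ [_ [rd _]]] := Sf.
  rewrite /L /lab3; apply: allpairs_f.
    by rewrite !inE; case: rd => [->|[->|->]]; rewrite eqxx ?orbT.
  apply: allpairs_f; apply: zr_mem => //; exact: lt_le_trans YK.
move=> l; apply: fiber_bound => // f g /hY Sf /hY Sg [e1 e2 e3].
have cl (u : {poly rat} -> R) : Num.floor (u f / s) = Num.floor (u g / s) -> `|u f - u g| < s.
  move/floor_eq_close; rewrite -mulrBl normrM (gtr0_norm (_ : 0 < s^-1)) ?invr_gt0 //.
  by rewrite ltr_pdivrMr // mul1r.
have [-> | h] := hd f g Sf Sg e1 (cl _ e2) (cl _ e3); first by left.
by right; apply: hm.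
Qed.

Section C.
Local Open Scope complex_scope.
Lemma ReD (R : realType) (a b : R[i]) : complex.Re (a + b) = complex.Re a + complex.Re b.
Proof. by case: a; case: b. Qed.
Lemma ImD (R : realType) (a b : R[i]) : complex.Im (a + b) = complex.Im a + complex.Im b.
Proof. by case: a; case: b. Qed.
Lemma ReN (R : realType) (a : R[i]) : complex.Re (- a) = - complex.Re a.
Proof. by case: a. Qed.
Lemma ImN (R : realType) (a : R[i]) : complex.Im (- a) = - complex.Im a.
Proof. by case: a. Qed.
Lemma ReJ (R : realType) (a : R[i]) : complex.Re (conjc a) = complex.Re a.
Proof. by case: a. Qed.
Lemma ImJ (R : realType) (a : R[i]) : complex.Im (conjc a) = - complex.Im a.
Proof. by case: a. Qed.
Lemma conj_fix (R : realType) (a : R[i]) : conjc a = a -> complex.Im a = 0.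
Proof. case: a => x y [] /= h; lra. Qed.
Lemma conj_real (R : realType) (a : R[i]) : complex.Im a = 0 -> conjc a = a.
Proof. by case: a => x y /= ->; rewrite oppr0. Qed.
End C.

Definition nrm (R : realType) (w : R[i]) : R :=
  Num.sqrt (complex.Re w ^+ 2 + complex.Im w ^+ 2).

Lemma norm_nrm (R : realType) (w : R[i]) : `|w| = real_complex R (nrm w).
Proof. by rewrite normc_def. Qed.

Lemma lt_nrm (R : realType) (w : R[i]) (Y : R) : (`|w| < real_complex R Y) = (nrm w < Y).
Proof. by rewrite norm_nrm ltcR. Qed.

Lemma nrm_real (R : realType) (w : R[i]) : complex.Im w = 0 -> nrm w = `|complex.Re w|.
Proof. by move=> h; rewrite /nrm h expr0n /= addr0 sqrtr_sqr. Qed.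

Lemma nrm_le (R : realType) (w : R[i]) : nrm w <= `|complex.Re w| + `|complex.Im w|.
Proof.
rewrite /nrm; set a := complex.Re w; set b := complex.Im w.
have hab : 0 <= `|a| + `|b| by rewrite addr_ge0.
rewrite -[X in _ <= X](ger0_norm hab) -sqrtr_sqr ler_sqrt ?sqr_ge0 //.
rewrite sqrrD -[a ^+ 2]real_normK ?num_real // -[b ^+ 2]real_normK ?num_real //.
by rewrite lerD2r lerDl mulrn_wge0 // mulr_ge0.
Qed.

Lemma Re_le_nrm (R : realType) (w : R[i]) : `|complex.Re w| <= nrm w.
Proof.
rewrite /nrm -sqrtr_sqr ler_sqrt ?addr_ge0 ?sqr_ge0 //.
by rewrite lerDl sqr_ge0.
Qed.

Lemma Im_le_nrm (R : realType) (w : R[i]) : `|complex.Im w| <= nrm w.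
Proof.
rewrite /nrm -sqrtr_sqr ler_sqrt ?addr_ge0 ?sqr_ge0 //.
by rewrite lerDr sqr_ge0.
Qed.

Lemma nrmJ (R : realType) (w : R[i]) : nrm (conjc w) = nrm w.
Proof. by rewrite /nrm ReJ ImJ sqrrN. Qed.

Lemma conj_ratr (R : realType) (t : rat) : conjc (ratr t : R[i]) = ratr t.
Proof. exact: (fmorph_rat (conjc : {rmorphism R[i] -> R[i]})). Qed.

Lemma conj_eval (R : realType) (f : {poly rat}) (z : R[i]) :
  conjc ((map_poly ratr f).[z]) = (map_poly ratr f).[conjc z].
Proof.
rewrite -(horner_map (conjc : {rmorphism R[i] -> R[i]})) -map_poly_comp.
congr (_.[_]); apply: eq_map_poly => b /=; exact: conj_ratr.
Qed.

Lemma Im_ratr (R : realType) (t : rat) : complex.Im (ratr t : R[i]) = 0.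
Proof. by apply: conj_fix; apply: conj_ratr. Qed.

Lemma perm_swap12 (T : eqType) (a b c : T) : perm_eq [:: b; a; c] [:: a; b; c].
Proof. by apply/permP => q /=; lia. Qed.
Lemma perm_rot3 (T : eqType) (a b c : T) : perm_eq [:: c; a; b] [:: a; b; c].
Proof. by apply/permP => q /=; lia. Qed.

Lemma aux_struct (R : realType) (z1 z2 z3 : R[i]) : uniq [:: z1; z2; z3] ->
  (forall z, z \in [:: z1; z2; z3] -> conjc z \in [:: z1; z2; z3]) ->
  complex.Im z1 != 0 ->
  exists u1 u2 u3, perm_eq [:: u1; u2; u3] [:: z1; z2; z3] /\
    complex.Im u1 = 0 /\ u3 = conjc u2.
Proof.
move=> u cl nz.
have cinj : injective (@conjc R) := can_inj (@conjcK R).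
have w1 : conjc z1 != z1 by apply: contra nz => /eqP /conj_fix ->.
move: u; rewrite /= !inE negb_or => /andP [/andP [n12 n13] /andP [n23 _]].
have := cl z1; rewrite !inE eqxx => /(_ isT) /orP [/eqP e1 | /orP [] /eqP e1].
- by rewrite e1 eqxx in w1.
-
  exists z3, z1, z2; split; first by apply/permP => q /=; lia.
  split; last by rewrite e1.
  have := cl z3; rewrite !inE eqxx !orbT => /(_ isT) /orP [/eqP e | /orP [] /eqP e].
  + by move: n23; rewrite -e1 -e conjcK eqxx.
  + by move: n13; rewrite -e1 in e; move/cinj: e => ->; rewrite eqxx.
  + exact: conj_fix.
- exists z2, z1, z3; split; first by apply/permP => q /=; lia.
  split; last by rewrite e1.
  have := cl z2; rewrite !inE eqxx !orbT => /(_ isT) /orP [/eqP e | /orP [] /eqP e].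
  + by move: n23; rewrite -e1 -e conjcK eqxx.
  + exact: conj_fix.
  + by move: n12; rewrite -e1 in e; move/cinj: e => ->; rewrite eqxx.
Qed.

Lemma root_struct (R : realType) (p : {poly rat}) : cubic_poly p ->
  exists u1 u2 u3 : R[i],
    map_poly ratr p = \prod_(z <- [:: u1; u2; u3]) ('X - z%:P) /\
    ((complex.Im u1 = 0 /\ complex.Im u2 = 0 /\ complex.Im u3 = 0) \/
     (complex.Im u1 = 0 /\ u3 = conjc u2)).
Proof.
move=> cp.
have [z1 [z2 [z3 [E U]]]] := @cubic_roots (R[i]) p cp.
have E' : map_poly ratr p = \prod_(z <- [:: z1; z2; z3]) ('X - z%:P).
  by rewrite E !big_cons big_nil mulr1 mulrA.
have cl : forall z, z \in [:: z1; z2; z3] -> conjc z \in [:: z1; z2; z3].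
  move=> z zr; rewrite -root_prod_XsubC -E' /root -conj_eval.
  by move: zr; rewrite -root_prod_XsubC -E' /root => /eqP ->; rewrite conjc0.
have fin : forall u1 u2 u3, perm_eq [:: u1; u2; u3] [:: z1; z2; z3] ->
    map_poly ratr p = \prod_(z <- [:: u1; u2; u3]) ('X - z%:P).
  by move=> u1 u2 u3 pe; rewrite E'; apply: perm_big; rewrite perm_sym.
have gen : forall w1 w2 w3, perm_eq [:: w1; w2; w3] [:: z1; z2; z3] ->
    complex.Im w1 != 0 -> exists u1 u2 u3 : R[i],
    map_poly ratr p = \prod_(z <- [:: u1; u2; u3]) ('X - z%:P) /\
    ((complex.Im u1 = 0 /\ complex.Im u2 = 0 /\ complex.Im u3 = 0) \/
     (complex.Im u1 = 0 /\ u3 = conjc u2)).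
  move=> w1 w2 w3 pw nz.
  have Uw : uniq [:: w1; w2; w3] by rewrite (perm_uniq pw).
  have clw : forall z, z \in [:: w1; w2; w3] -> conjc z \in [:: w1; w2; w3].
    by move=> z; rewrite !(perm_mem pw); apply: cl.
  have [u1 [u2 [u3 [pu [h1 h2]]]]] := aux_struct Uw clw nz.
  exists u1, u2, u3; split; last by right.
  by apply: fin; apply: perm_trans pu pw.
have [n1|/negPn/eqP i1] := boolP (complex.Im z1 != 0); first exact: gen.
have [n2|/negPn/eqP i2] := boolP (complex.Im z2 != 0).
  by apply: (gen z2 z1 z3) => //; apply: perm_swap12.
have [n3|/negPn/eqP i3] := boolP (complex.Im z3 != 0).
  by apply: (gen z3 z1 z2) => //; apply: perm_rot3.
by exists z1, z2, z3; split => //; left.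
Qed.

Lemma coords (R : realType) (p : {poly rat}) : cubic_poly p ->
  exists cx cy : {poly rat} -> R,
  (forall f (Y : R), abs_inf_lt p f Y -> `|cx f| < Y /\ `|cy f| < Y) /\
  (forall f g (s : R), inK f -> inK g -> traceK p f = traceK p g ->
     `|cx f - cx g| < s -> `|cy f - cy g| < s -> abs_inf_lt p (f - g) (2 * s)).
Proof.
move=> cp; have [mp [sp _]] := cp.
have [u1 [u2 [u3 [E cases]]]] := root_struct R cp.
pose ev (f : {poly rat}) (z : R[i]) := (map_poly ratr f).[z].
have evB : forall f g z, ev (f - g) z = ev f z - ev g z.
  by move=> f g z; rewrite /ev rmorphB /= hornerD hornerN.
have rts : forall z, root (map_poly ratr p) z -> [\/ z = u1, z = u2 | z = u3].
  move=> z; rewrite E root_prod_XsubC !inE => /orP [/eqP ->|/orP [/eqP ->|/eqP ->]].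
  - by constructor 1. - by constructor 2. - by constructor 3.
have isr : forall z, z \in [:: u1; u2; u3] -> root (map_poly ratr p) z.
  by move=> z; rewrite E root_prod_XsubC.
have r1 := isr u1 (mem_head _ _).
have r2 : root (map_poly ratr p) u2 by apply: isr; rewrite !inE eqxx orbT.
have r3 : root (map_poly ratr p) u3 by apply: isr; rewrite !inE eqxx !orbT.
have E3 : map_poly ratr p = ('X - u1%:P) * ('X - u2%:P) * ('X - u3%:P).
  by rewrite E !big_cons big_nil mulr1 mulrA.
have sum0 : forall f g, inK f -> inK g -> traceK p f = traceK p g ->
    ev (f - g) u1 + ev (f - g) u2 + ev (f - g) u3 = 0.
  move=> f g kf kg et; rewrite !evB.
  have hf := trace_sum mp sp kf E3; have hg := trace_sum mp sp kg E3.
  rewrite et hg in hf.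
  have -> : forall a1 a2 a3 b1 b2 b3 : R[i],
    a1 - b1 + (a2 - b2) + (a3 - b3) = (a1 + a2 + a3) - (b1 + b2 + b3) by move=> *; ring.
  by rewrite /ev -hf subrr.
have lt1 : forall f (Y : R) z, abs_inf_lt p f Y -> root (map_poly ratr p) z -> nrm (ev f z) < Y.
  by move=> f Y z h rz; rewrite -lt_nrm; apply: h.
have hs : forall (a b s : R), `|a| < s -> `|b| <= `|a| -> `|b| < 2 * s.
  move=> a b s h1 h2; have := normr_ge0 a; lra.
case: cases => [[i1 [i2 i3]] | [i1 e3]].
- have re : forall h z, complex.Im z = 0 -> complex.Im (ev h z) = 0.
    by move=> h z iz; apply: conj_fix; rewrite /ev conj_eval conj_real.
  exists (fun f => complex.Re (ev f u1)), (fun f => complex.Re (ev f u2)); split.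
    move=> f Y h; split; apply: le_lt_trans (Re_le_nrm _) _; exact: lt1 h _.
  move=> f g s kf kg et h1 h2 z rz; rewrite lt_nrm -/(ev _ _).
  have s0 : 0 < s by apply: le_lt_trans h1.
  have S := sum0 f g kf kg et.
  have d1 : nrm (ev (f - g) u1) < s by rewrite nrm_real ?re // evB ReD ReN.
  have d2 : nrm (ev (f - g) u2) < s by rewrite nrm_real ?re // evB ReD ReN.
  case: (rts z rz) => ->.
  + lra.
  + lra.
  + have -> : ev (f - g) u3 = - (ev (f - g) u1 + ev (f - g) u2).
      by apply/eqP; rewrite -addr_eq0 addrC; apply/eqP.
    rewrite nrm_real; last by rewrite ImN ImD !re // addr0 oppr0.
    rewrite ReN ReD normrN.
    move: d1 d2; rewrite !nrm_real ?re // => d1 d2.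
    have := ler_normD (complex.Re (ev (f - g) u1)) (complex.Re (ev (f - g) u2)); lra.
- have re1 : forall h, complex.Im (ev h u1) = 0.
    by move=> h; apply: conj_fix; rewrite /ev conj_eval conj_real.
  have c3 : forall h, ev h u3 = conjc (ev h u2) by move=> h; rewrite /ev conj_eval e3.
  exists (fun f => complex.Re (ev f u2)), (fun f => complex.Im (ev f u2)); split.
    move=> f Y h; split.
      apply: le_lt_trans (Re_le_nrm _) _; exact: lt1 h _.
    apply: le_lt_trans (Im_le_nrm _) _; exact: lt1 h _.
  move=> f g s kf kg et h1 h2 z rz; rewrite lt_nrm -/(ev _ _).
  have S := sum0 f g kf kg et.
  have d2 : nrm (ev (f - g) u2) < 2 * s.
    apply: le_lt_trans (nrm_le _) _; rewrite evB ReD ReN ImD ImN; lra.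
  case: (rts z rz) => ->.
  + have e1 : ev (f - g) u1 = - (ev (f - g) u2 + ev (f - g) u3).
      by apply/eqP; rewrite -addr_eq0 addrA; apply/eqP.
    rewrite nrm_real ?re1 // e1 ReN ReD c3 ReJ normrN -mulr2n normrMn mulr2n evB ReD ReN; lra.
  + exact: d2.
  + by rewrite c3 nrmJ.
Qed.

Lemma lin_bound (F : numDomainType) (c1 c2 c3 b1 b2 b3 B : F) :
  `|b1| <= B -> `|b2| <= B -> `|b3| <= B ->
  `|c1 * b1 + c2 * b2 + c3 * b3| <= (`|c1| + `|c2| + `|c3|) * B.
Proof.
move=> h1 h2 h3.
apply: le_trans (ler_normD _ _) _; rewrite !mulrDl.
apply: lerD; first apply: le_trans (ler_normD _ _) _; first apply: lerD.
all: by rewrite normrM ler_wpM2l.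
Qed.

Lemma lagrange (F : fieldType) (z1 z2 z3 G0 G1 G2 : F) :
  z1 != z2 -> z1 != z3 -> z2 != z3 ->
  let b z := G0 + G1 * z + G2 * z ^+ 2 in
  let D1 := (z1 - z2) * (z1 - z3) in
  let D2 := (z2 - z1) * (z2 - z3) in
  let D3 := (z3 - z1) * (z3 - z2) in
  [/\ G2 = D1^-1 * b z1 + D2^-1 * b z2 + D3^-1 * b z3,
      G1 = (- (z2 + z3) / D1) * b z1 + (- (z1 + z3) / D2) * b z2 + (- (z1 + z2) / D3) * b z3 &
      G0 = (z2 * z3 / D1) * b z1 + (z1 * z3 / D2) * b z2 + (z1 * z2 / D3) * b z3].
Proof.
move=> n12 n13 n23 b D1 D2 D3.
have d12 : z1 - z2 != 0 by rewrite subr_eq0.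
have d13 : z1 - z3 != 0 by rewrite subr_eq0.
have d23 : z2 - z3 != 0 by rewrite subr_eq0.
have d21 : z2 - z1 != 0 by rewrite subr_eq0 eq_sym.
have d31 : z3 - z1 != 0 by rewrite subr_eq0 eq_sym.
have d32 : z3 - z2 != 0 by rewrite subr_eq0 eq_sym.
rewrite /b /D1 /D2 /D3; split; field.
all: by rewrite d12 d13 d23 d21 d31 d32.
Qed.

Lemma coef_bound (F : numFieldType) (z1 z2 z3 : F) : uniq [:: z1; z2; z3] ->
  exists M : F, 0 <= M /\ forall (f : {poly rat}) (B : F), inK f ->
    `|(map_poly ratr f).[z1]| <= B -> `|(map_poly ratr f).[z2]| <= B ->
    `|(map_poly ratr f).[z3]| <= B ->
    forall k, (k < 3)%N -> `|(ratr f`_k : F)| <= M * B.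
Proof.
rewrite /= !inE !negb_or => /andP [/andP [n12 n13] /andP [n23 _]].
set D1 := (z1 - z2) * (z1 - z3).
set D2 := (z2 - z1) * (z2 - z3).
set D3 := (z3 - z1) * (z3 - z2).
set S2 := `|D1^-1| + `|D2^-1| + `|D3^-1|.
set S1 := `|- (z2 + z3) / D1| + `|- (z1 + z3) / D2| + `|- (z1 + z2) / D3|.
set S0 := `|z2 * z3 / D1| + `|z1 * z3 / D2| + `|z1 * z2 / D3|.
have p2 : 0 <= S2 by rewrite !addr_ge0.
have p1 : 0 <= S1 by rewrite !addr_ge0.
have p0 : 0 <= S0 by rewrite !addr_ge0.
exists (S0 + S1 + S2); split; first by rewrite !addr_ge0.
move=> f B kf h1 h2 h3 k hk.
have B0 : 0 <= B by apply: le_trans h1.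
have ev : forall z : F, (map_poly ratr f).[z] = ratr f`_0 + ratr f`_1 * z + ratr f`_2 * z ^+ 2.
  by move=> z; rewrite [X in map_poly _ X](quad_of kf) map_quad horner_quad.
rewrite !ev in h1 h2 h3.
have [e2 e1 e0] := lagrange (ratr f`_0) (ratr f`_1) (ratr f`_2) n12 n13 n23.
have q0 : S0 <= S0 + S1 + S2 by rewrite -addrA lerDl addr_ge0.
have q1 : S1 <= S0 + S1 + S2 by rewrite (addrC S0) -addrA lerDl addr_ge0.
have q2 : S2 <= S0 + S1 + S2 by rewrite lerDr addr_ge0.
case: k hk => [|[|[|]]] // _.
- rewrite e0; exact: le_trans (lin_bound _ _ _ h1 h2 h3) (ler_wpM2r B0 q0).
- rewrite e1; exact: le_trans (lin_bound _ _ _ h1 h2 h3) (ler_wpM2r B0 q1).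
- rewrite e2; exact: le_trans (lin_bound _ _ _ h1 h2 h3) (ler_wpM2r B0 q2).
Qed.

Lemma card_of_list (P : {poly rat} -> Prop) (L : seq {poly rat}) :
  (forall f, P f -> f \in L) -> exists n, card_is P n.
Proof.
move=> hL.
pose pb f := if excluded_middle_informative (P f) then true else false.
have pbP : forall f, pb f <-> P f.
  by move=> f; rewrite /pb; case: excluded_middle_informative.
exists (size (undup (filter pb L))), (undup (filter pb L)); split; first exact: undup_uniq.
split => //; move=> f; rewrite mem_undup mem_filter; split.
  by move=> /andP [/pbP].
by move=> Pf; rewrite (hL _ Pf) andbT; apply/pbP.
Qed.

Lemma zr_int (n : int) (K : nat) : `|n| <= K%:Z -> n \in zr K.
Proof.
move=> h; apply/mapP; exists (absz (n + K%:Z)).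
  rewrite mem_iota add0n; lia.
lia.
Qed.

Lemma common_den (s : seq rat) : exists D : int, 0 < D /\
  forall x, x \in s -> (D%:~R * x) \is a Num.int.
Proof.
elim: s => [|x s [D [D0 hD]]]; first by exists 1.
exists (denq x * D); split; first by rewrite mulr_gt0.
move=> y; rewrite inE => /orP [/eqP -> | ys].
  have -> : (denq x * D)%:~R * x = D%:~R * (numq x)%:~R :> rat by rewrite numqE intrM; ring.
  by rewrite rpredM ?rpred_int.
by rewrite intrM -mulrA rpredM ?rpred_int ?hD.
Qed.

Lemma real_le_nat (R : realType) (x : R[i]) : x \is Num.real -> exists N : nat, x <= N%:R.
Proof.
move=> xr; rewrite -(RRe_real xr).
exists (absz (Num.floor (complex.Re x) + 1)).
have h := floorD1_gt (complex.Re x).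
have -> : (absz (Num.floor (complex.Re x) + 1))%:R = real_complex R (absz (Num.floor (complex.Re x) + 1))%:R.
  by rewrite rmorph_nat.
rewrite lecR; apply: (le_trans (ltW h)).
by rewrite natr_absz ler_int ler_norm.
Qed.

Lemma SK_finite (R : realType) (p : {poly rat}) (Y : R) : cubic_poly p ->
  (exists d, is_disc p d) -> exists n, card_is (S_K p Y) n.
Proof.
move=> cp [d [w [hw1 [hw2 [hw3 _]]]]].
have [D [D0 hD]] := common_den [seq (w i)`_j | i <- enum 'I_3, j <- iota 0 3].
have [z1 [z2 [z3 [E U]]]] := @cubic_roots (R[i]) p cp.
have [M [M0 hM]] := coef_bound U.
have rz1 : root (map_poly ratr p) z1 by rewrite E !rootM !root_XsubC eqxx.
have rz2 : root (map_poly ratr p) z2 by rewrite E !rootM !root_XsubC eqxx orbT.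
have rz3 : root (map_poly ratr p) z3 by rewrite E !rootM !root_XsubC eqxx orbT.
have Mr : M * real_complex R Y \is Num.real.
  apply: rpredM; first exact: ger0_real.
  rewrite realE.
  have -> : (0 : R[i]) = real_complex R 0 by [].
  by rewrite !lecR -realE num_real.
have [N hN] := real_le_nat Mr.
pose Q := [seq (n%:~R / D%:~R : rat) | n <- zr (absz D * N)].
pose L := [seq quad a bc.1 bc.2 | a <- Q, bc <- [seq (b, c) | b <- Q, c <- Q]].
apply: (@card_of_list _ L) => f [hok [_ [_ hab]]].
have kf : inK f := hok.1.
have [k Ek] := hw3 f hok.
have cb : forall j, (j < 3)%N -> `|f`_j| <= N%:R.
  move=> j hj.
  have := hM f (real_complex R Y) kf (ltW (hab _ rz1)) (ltW (hab _ rz2)) (ltW (hab _ rz3)) j hj.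
  move=> h; rewrite -(ler_rat (R[i])) ratr_norm rmorph_nat; exact: le_trans h hN.
have ci : forall j, (j < 3)%N -> (D%:~R * f`_j) \is a Num.int.
  move=> j hj; rewrite Ek coef_sum mulr_sumr; apply: rpred_sum => i _.
  rewrite coefZ mulrCA rpredM ?rpred_int // hD //.
  by apply: allpairs_f; rewrite ?mem_enum ?mem_iota.
have Dn0 : (D%:~R : rat) != 0 by rewrite intr_eq0 gt_eqF.
have inQ : forall j, (j < 3)%N -> f`_j \in Q.
  move=> j hj; apply/mapP; exists (Num.floor (D%:~R * f`_j)).
    apply: zr_int; rewrite -(ler_int rat) intr_norm floorK ?ci //.
    rewrite normrM (gtr0_norm (_ : 0 < D%:~R)) ?ltr0z // PoszM intrM abszE (gtr0_norm D0).
    by rewrite ler_wpM2l ?ler0z ?(ltW D0) // cb.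
  by rewrite floorK ?ci //; field.
rewrite (quad_of kf).
apply: (allpairs_f (fun a bc => quad a bc.1 bc.2) (inQ 0%N isT) (y := (f`_1, f`_2))).
exact: allpairs_f (inQ 1%N isT) (inQ 2%N isT).
Qed.

Lemma traceK_sub (p f g : {poly rat}) : traceK p (f - g) = traceK p f - traceK p g.
Proof.
rewrite /traceK -sumrB; apply: eq_bigr => i _.
by rewrite mulrBl modpD modpN coefD coefN.
Qed.

Lemma traceK_C (p : {poly rat}) (k : rat) : p \is monic -> size p = 4%N ->
  traceK p k%:P = 3 * k.
Proof.
move=> mp sp; have Ep := monic4E mp sp.
have -> : k%:P = quad k 0 0 by rewrite quadE !mul0r !addr0.
rewrite Ep traceK_quad; ring.
Qed.

Lemma diam (R : realType) (p : {poly rat}) (Y s : R) (cx cy : {poly rat} -> R) f g :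
  cubic_poly p ->
  (forall f g (s : R), inK f -> inK g -> traceK p f = traceK p g ->
     `|cx f - cx g| < s -> `|cy f - cy g| < s -> abs_inf_lt p (f - g) (2 * s)) ->
  S_K p Y f -> S_K p Y g -> traceK p f = traceK p g ->
  `|cx f - cx g| < s -> `|cy f - cy g| < s -> f = g \/ S_K p (2 * s) (f - g).
Proof.
move=> cp hc [okf _] [okg _] et h1 h2.
have [mp [sp _]] := cp.
have [e | ne] := eqVneq f g; first by left.
right; split; first exact: OK_sub.
have t0 : traceK p (f - g) = 0 by rewrite traceK_sub et subrr.
split.
  move=> [k Ek]; move: t0; rewrite Ek traceK_C // => /eqP.
  rewrite mulf_eq0 /= intr_eq0 => /eqP k0.
  by move: Ek; rewrite k0 /= => /eqP; rewrite polyC0 subr_eq0 (negPf ne).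
split; first by right; left.
exact: hc f g s okf.1 okg.1 et h1 h2.
Qed.

Unset Implicit Arguments. Set Strict Implicit.

Theorem lemma3p7 (R : realType) (C : R) :
  1 < C ->
  (forall (Z : R) (p : {poly rat}) (d : int), 0 < Z -> cubic_poly p ->
     is_disc p d -> (`|d|%:~R : R) <= Z ->
     exists f, S_K p (C * Z `^ (1/4)) f) ->
  exists c : R, 0 < c /\
    forall (X Y : R) (p : {poly rat}), 0 < X -> 0 < Y ->
      C * X `^ (1/4) <= Y -> cubic_poly p ->
      (exists d : int, is_disc p d /\ X / 2 <= (`|d|%:~R : R) <= X) ->
      exists n m : nat,
        card_is (S_K p Y) n /\ card_is (S_K p (C * X `^ (1/4))) m /\
        (n%:R / m%:R : R) <= c * (Y ^+ 2 / X `^ (1/2)).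
Proof.
move=> C1 H; exists 294; split; first by rewrite ltr0n.
move=> X Y p X0 Y0 hY cp [d [hd /andP [_ hX]]].
set r := C * X `^ (1/4).
have C0 : 0 < C by apply: lt_trans C1.
have r0 : 0 < r by rewrite mulr_gt0 // powR_gt0.
have [n [sY [uY [hsY szY]]]] := SK_finite Y cp (ex_intro _ d hd).
have [m [sm [um [hsm szm]]]] := SK_finite r cp (ex_intro _ d hd).
exists n, m; split; first by exists sY.
split; first by exists sm.
have [cx [cy [hc1 hc2]]] := coords R cp.
set s := r / 2.
have s0 : 0 < s by rewrite divr_gt0.
have e2s : 2 * s = r by rewrite /s; field.
set K := absz (Num.floor (Y / s) + 1).
have fl0 : 0 <= Num.floor (Y / s) by rewrite floor_ge0 divr_ge0 // ltW.
have KE : K%:R = (Num.floor (Y / s))%:~R + 1 :> R.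
  by rewrite /K natr_absz ger0_norm ?intrD // addr_ge0.
have YK : Y <= K%:R * s.
  rewrite -ler_pdivrMr // KE; apply: ltW; have := floorD1_gt (Y / s); by rewrite intrD.
have cnt := count_main s0 YK uY (fun f hf => (hsY f).1 hf) (fun f hf => (hsm f).2 hf)
  (fun f hf => hc1 f Y hf.2.2.2)
  (fun f g hf hg et h1 h2 => ltac:(rewrite -e2s; exact: diam cp hc2 hf hg et h1 h2)).
rewrite szY szm in cnt.
have [f0 Sf0] := H X p d X0 cp hd hX.
have m1 : (1 <= m)%N.
  by rewrite -szm; case: (sm) (hsm f0) => [|? ?] // [_ /(_ Sf0)].
have hn : (n%:R : R) <= 3 * ((2 * K%:R + 1) * (2 * K%:R + 1)) * (m%:R + 1).
  move: cnt; rewrite -(ler_nat R) => h; apply: le_trans h _.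
  by rewrite !(natrM, natrD) /= [m.+1%:R]mulrSr.
have mR : (1 : R) <= m%:R by rewrite ler1n.
set t := Y / r.
have t1 : 1 <= t by rewrite /t ler_pdivlMr // mul1r.
have rn0 : r != 0 by rewrite gt_eqF.
have Ys : Y / s = 2 * t by rewrite /s /t; field.
have hK : (K%:R : R) <= 2 * t + 1.
  by rewrite KE lerD2r -Ys floor_le.
set A := 2 * (K%:R : R) + 1.
have A0 : 0 <= A by rewrite /A addr_ge0 // mulr_ge0.
have A7 : A <= 7 * t by rewrite /A; lra.
have key : (n%:R : R) <= 6 * A ^+ 2 * m%:R.
  have h0 : 0 <= A ^+ 2 * (m%:R - 1) by rewrite mulr_ge0 ?sqr_ge0 // subr_ge0.
  rewrite -/A in hn; nra.
have q0 : 0 < X `^ (1/2) by rewrite powR_gt0.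
have rq : r ^+ 2 = C ^+ 2 * X `^ (1/2).
  have -> : (1/2 : R) = 1/4 + 1/4 by field.
  by rewrite powRD ?(gt_eqF X0) ?implybT // /r exprMn expr2.
have t2 : t ^+ 2 <= Y ^+ 2 / X `^ (1/2).
  rewrite /t exprMn exprVn rq ler_wpM2l ?sqr_ge0 //.
  rewrite lef_pV2 ?posrE ?mulr_gt0 ?exprn_gt0 //.
  rewrite ler_peMl ?(ltW q0) //.
  by rewrite -[1](expr1n _ 2) ler_pXn2r ?nnegrE ?ltW.
have A2 : A ^+ 2 <= 49 * t ^+ 2 by nra.
rewrite ler_pdivrMr ?ltr0n ?(leq_trans _ m1) //.
nra.
Qed.
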